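(* Fix $e\in -\mathrm{int}(C)$ and let $A,B\in\mathcal P^0_{\mp C}(Y)$ be $\mp C$-compact sets. Then $(0,0)<_{\mathbb R^2_+}w_e(A,B)$ if and only if $A\prec^s B$.
   Context: $Y$ is a real topological linear space and $C\subset Y$ is a convex, closed, pointed cone with nonempty interior. $a<_{\mathbb R^2_+}b$ iff $b-a\in\mathrm{int}(\mathbb R^2_+)$. $\mathcal P^0_{\mp C}(Y)$ is the family of nonempty $A\subset Y$ with $A+C\neq Y$ and $A-C\neq Y$. $A$ is $C$-compact if every cover of $A$ by sets $U_\alpha+C$ with $U_\alpha$ open has a finite subcover; $\mp C$-compact means $C$-compact and $-C$-compact. $A\prec^s B$ iff $B\subset A+\mathrm{int}(C)$ and $A\subset B-\mathrm{int}(C)$. For $e\in-\mathrm{int}(C)$: $\phi_{e,A}(y)=\inf\{t\in\mathbb R: y\in te+A+C\}$; $G^\ell_e(A,B)=\sup_{b\in B}\phi_{e,A}(b)$; $G^u_e(B,A):=-G^\ell_e(-B,-A)$; $w_e(A,B)=\big(-G^\ell_e(A,B),\,G^u_e(B,A)\big)$. *)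

(* Defs.v *)
From Stdlib Require Import Reals List ClassicalEpsilon.
Open Scope R_scope.

Record TVS := {
  carrier :> Type;
  vadd : carrier -> carrier -> carrier;
  vopp : carrier -> carrier;
  vzero : carrier;
  vscal : R -> carrier -> carrier;
  vadd_assoc : forall x y z, vadd x (vadd y z) = vadd (vadd x y) z;
  vadd_comm : forall x y, vadd x y = vadd y x;
  vadd_0 : forall x, vadd x vzero = x;
  vadd_opp : forall x, vadd x (vopp x) = vzero;
  vscal_assoc : forall a b x, vscal a (vscal b x) = vscal (a * b) x;
  vscal_1 : forall x, vscal 1 x = x;
  vscal_distr_l : forall a x y, vscal a (vadd x y) = vadd (vscal a x) (vscal a y);
  vscal_distr_r : forall a b x, vscal (a + b) x = vadd (vscal a x) (vscal b x);
  is_open : (carrier -> Prop) -> Prop;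
  open_full : is_open (fun _ => True);
  open_inter : forall U V, is_open U -> is_open V -> is_open (fun x => U x /\ V x);
  open_union : forall (I : Type) (F : I -> carrier -> Prop),
      (forall i, is_open (F i)) -> is_open (fun x => exists i, F i x);
  vadd_cont : forall U x y, is_open U -> U (vadd x y) ->
      exists V W, is_open V /\ is_open W /\ V x /\ W y /\
                  (forall v w, V v -> W w -> U (vadd v w));
  vscal_cont : forall U t x, is_open U -> U (vscal t x) ->
      exists d V, 0 < d /\ is_open V /\ V x /\
                  (forall s v, Rabs (s - t) < d -> V v -> U (vscal s v))
}.

Arguments vadd {_}. Arguments vopp {_}. Arguments vzero {_}.
Arguments vscal {_}. Arguments is_open {_}.

Section Sets.
Context {Y : TVS}.

Definition int_set (S : Y -> Prop) : Y -> Prop :=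
  fun y => exists U, is_open U /\ U y /\ (forall z, U z -> S z).

Definition is_closed (S : Y -> Prop) : Prop := is_open (fun y => ~ S y).

Definition set_add (S T : Y -> Prop) : Y -> Prop :=
  fun y => exists s t, S s /\ T t /\ y = vadd s t.
Definition set_opp (S : Y -> Prop) : Y -> Prop := fun y => S (vopp y).
Definition set_sub (S T : Y -> Prop) : Y -> Prop := set_add S (set_opp T).
Definition sing_set (a : Y) : Y -> Prop := fun y => y = a.

Definition is_cone (C : Y -> Prop) : Prop :=
  forall t c, 0 <= t -> C c -> C (vscal t c).
Definition is_convex (C : Y -> Prop) : Prop :=
  forall x y t, 0 <= t <= 1 -> C x -> C y -> C (vadd (vscal t x) (vscal (1 - t) y)).
Definition is_pointed (C : Y -> Prop) : Prop :=
  forall c, C c -> C (vopp c) -> c = vzero.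
Definition standing_cone (C : Y -> Prop) : Prop :=
  is_cone C /\ is_convex C /\ is_closed C /\ is_pointed C /\ exists y, int_set C y.

Definition in_P0 (C A : Y -> Prop) : Prop :=
  (exists a, A a) /\ ~ (forall y, set_add A C y) /\ ~ (forall y, set_sub A C y).

Definition K_compact (K A : Y -> Prop) : Prop :=
  forall (I : Type) (U : I -> Y -> Prop),
    (forall i, is_open (U i)) ->
    (forall a, A a -> exists i, set_add (U i) K a) ->
    exists l : list I, forall a, A a -> exists i, In i l /\ set_add (U i) K a.

Definition mpC_compact (C A : Y -> Prop) : Prop :=
  K_compact C A /\ K_compact (set_opp C) A.

Definition set_less_s (C A B : Y -> Prop) : Prop :=
  (forall b, B b -> set_add A (int_set C) b) /\
  (forall a, A a -> set_sub B (int_set C) a).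

End Sets.

Inductive Rbar := Finite (r : R) | p_infty | m_infty.

Definition Rbar_le (x y : Rbar) : Prop :=
  match x, y with
  | m_infty, _ => True
  | _, p_infty => True
  | p_infty, _ => False
  | _, m_infty => False
  | Finite a, Finite b => a <= b
  end.
Definition Rbar_lt (x y : Rbar) : Prop :=
  match x, y with
  | m_infty, m_infty => False
  | m_infty, _ => True
  | p_infty, _ => False
  | Finite _, p_infty => True
  | Finite _, m_infty => False
  | Finite a, Finite b => a < b
  end.
Definition Rbar_opp (x : Rbar) : Rbar :=
  match x with Finite a => Finite (- a) | p_infty => m_infty | m_infty => p_infty end.

Definition is_Rbar_lub (S : Rbar -> Prop) (x : Rbar) : Prop :=
  (forall y, S y -> Rbar_le y x) /\ (forall z, (forall y, S y -> Rbar_le y z) -> Rbar_le x z).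
Definition is_Rbar_glb (S : Rbar -> Prop) (x : Rbar) : Prop :=
  (forall y, S y -> Rbar_le x y) /\ (forall z, (forall y, S y -> Rbar_le z y) -> Rbar_le z x).

(** supremum / infimum in the complete lattice of extended reals
    (sup of empty = -oo, inf of empty = +oo) *)
Definition Rbar_sup (S : Rbar -> Prop) : Rbar :=
  epsilon (inhabits m_infty) (is_Rbar_lub S).
Definition Rbar_inf (S : Rbar -> Prop) : Rbar :=
  epsilon (inhabits p_infty) (is_Rbar_glb S).

Section Scalarization.
Context {Y : TVS}.

Definition phi (C : Y -> Prop) (e : Y) (A : Y -> Prop) (y : Y) : Rbar :=
  Rbar_inf (fun z => exists t, z = Finite t /\
              set_add (set_add (sing_set (vscal t e)) A) C y).

Definition G_l (C : Y -> Prop) (e : Y) (A B : Y -> Prop) : Rbar :=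
  Rbar_sup (fun z => exists b, B b /\ z = phi C e A b).

Definition G_u (C : Y -> Prop) (e : Y) (B A : Y -> Prop) : Rbar :=
  Rbar_opp (G_l C e (set_opp B) (set_opp A)).

Definition w_e (C : Y -> Prop) (e : Y) (A B : Y -> Prop) : Rbar * Rbar :=
  (Rbar_opp (G_l C e A B), G_u C e B A).

End Scalarization.

(** a <_{R^2_+} b  iff  b - a in int(R^2_+), i.e. componentwise strict *)
Definition lt_R2plus (a b : Rbar * Rbar) : Prop :=
  Rbar_lt (fst a) (fst b) /\ Rbar_lt (snd a) (snd b).

(* Main.v *)
Require Import Defs.
From Stdlib Require Import Reals List ClassicalEpsilon.
From Stdlib Require Import Lra Classical FunctionalExtensionality PropExtensionality.
Open Scope R_scope.

Lemma lub_ex (S : Rbar -> Prop) : exists x, is_Rbar_lub S x.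
Proof.
  destruct (classic (S p_infty)) as [Hp|Hp].
  { exists p_infty; split; [intros [] _; simpl; auto|].
    intros z Hz; apply Hz; auto. }
  destruct (classic (exists r, S (Finite r))) as [[r0 Hr0]|Hf].
  2:{ exists m_infty; split; [|intros; simpl; auto].
      intros [r| |] Hy; simpl; auto. apply Hf; eauto. }
  set (E := fun r => S (Finite r)).
  destruct (classic (bound E)) as [Hb|Hb].
  - destruct (completeness E Hb (ex_intro _ r0 Hr0)) as [m [Hm1 Hm2]].
    exists (Finite m); split.
    + intros [r| |] Hy; simpl; auto; try (apply Hm1; exact Hy).
    + intros [w| |] Hz; simpl; auto.
      * apply Hm2; intros x Hx; apply (Hz _ Hx).
      * apply (Hz _ Hr0).
  - exists p_infty; split; [intros [] _; simpl; auto|].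
    intros [w| |] Hz; simpl; auto.
    + apply Hb; exists w; intros x Hx; apply (Hz _ Hx).
    + apply (Hz _ Hr0).
Qed.

Lemma Rbar_opp_opp x : Rbar_opp (Rbar_opp x) = x.
Proof. destruct x; simpl; auto; f_equal; ring. Qed.

Lemma Rbar_le_opp x y : Rbar_le (Rbar_opp x) (Rbar_opp y) <-> Rbar_le y x.
Proof. destruct x, y; simpl; split; auto; lra. Qed.

Lemma glb_ex (S : Rbar -> Prop) : exists x, is_Rbar_glb S x.
Proof.
  destruct (lub_ex (fun y => S (Rbar_opp y))) as [x [H1 H2]].
  exists (Rbar_opp x); split.
  - intros y Hy. apply Rbar_le_opp. rewrite Rbar_opp_opp. apply H1.
    rewrite Rbar_opp_opp; auto.
  - intros z Hz. rewrite <- (Rbar_opp_opp z). apply Rbar_le_opp.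
    apply H2. intros y Hy. rewrite <- (Rbar_opp_opp y). apply Rbar_le_opp.
    apply Hz; auto.
Qed.

Lemma Rbar_sup_spec S : is_Rbar_lub S (Rbar_sup S).
Proof. unfold Rbar_sup. apply epsilon_spec, lub_ex. Qed.
Lemma Rbar_inf_spec S : is_Rbar_glb S (Rbar_inf S).
Proof. unfold Rbar_inf. apply epsilon_spec, glb_ex. Qed.

Lemma opp_lt0 x : Rbar_lt (Finite 0) (Rbar_opp x) <-> Rbar_lt x (Finite 0).
Proof. destruct x; simpl; split; auto; lra. Qed.

Lemma min_pos {I : Type} (l : list I) (f : I -> R) :
  (forall i, 0 < f i) -> exists m, 0 < m /\ forall i, In i l -> m <= f i.
Proof.
  intros Hf; induction l as [|a l IH].
  - exists 1; split; [lra|intros i []].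
  - destruct IH as [m [Hm Hl]]. exists (Rmin m (f a)); split.
    + apply Rmin_pos; auto.
    + intros i [<-|Hi]; [apply Rmin_r|]. eapply Rle_trans; [apply Rmin_l|auto].
Qed.

Section V.
Context {Y : TVS}.

Lemma vadd_0l (x : Y) : vadd vzero x = x.
Proof. rewrite vadd_comm; apply vadd_0. Qed.
Lemma vopp_l (x : Y) : vadd (vopp x) x = vzero.
Proof. rewrite vadd_comm; apply vadd_opp. Qed.
Lemma vadd_cancel (x y z : Y) : vadd x y = vadd x z -> y = z.
Proof.
  intro H. rewrite <- (vadd_0l y), <- (vadd_0l z), <- (vopp_l x),
    <- !vadd_assoc, H; auto.
Qed.
Lemma vopp_unique (x y : Y) : vadd x y = vzero -> y = vopp x.
Proof. intro H; apply (vadd_cancel x); rewrite H, vadd_opp; auto. Qed.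
Lemma vopp_opp (x : Y) : vopp (vopp x) = x.
Proof. symmetry; apply vopp_unique, vopp_l. Qed.
Lemma vswap (x y z : Y) : vadd x (vadd y z) = vadd y (vadd x z).
Proof. rewrite !vadd_assoc, (vadd_comm _ x y); auto. Qed.
Lemma vopp_add (x y : Y) : vopp (vadd x y) = vadd (vopp x) (vopp y).
Proof.
  symmetry; apply vopp_unique.
  rewrite <- vadd_assoc, (vswap y), vadd_opp, vadd_0, vadd_opp; auto.
Qed.
Lemma vcancel1 (x z : Y) : vadd x (vadd (vopp x) z) = z.
Proof. rewrite vadd_assoc, vadd_opp, vadd_0l; auto. Qed.
Lemma vcancel2 (x z : Y) : vadd (vopp x) (vadd x z) = z.
Proof. rewrite vadd_assoc, vopp_l, vadd_0l; auto. Qed.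
Lemma vscal_0l (x : Y) : vscal 0 x = vzero.
Proof.
  assert (h := vscal_distr_r Y 0 0 x). rewrite Rplus_0_l in h.
  apply (vadd_cancel (vscal 0 x)); rewrite vadd_0, <- h; auto.
Qed.
Lemma vscal_m1 (x : Y) : vscal (-1) x = vopp x.
Proof.
  apply vopp_unique.
  transitivity (vadd (vscal 1 x) (vscal (-1) x)); [rewrite vscal_1; auto|].
  rewrite <- vscal_distr_r. replace (1 + -1) with 0 by ring. apply vscal_0l.
Qed.
Lemma vscal_neg (t : R) (e : Y) : vscal t e = vscal (-t) (vopp e).
Proof.
  rewrite <- vscal_m1, vscal_assoc. f_equal; ring.
Qed.

Lemma open_local (S : Y -> Prop) :
  (forall x, S x -> exists V, is_open V /\ V x /\ forall z, V z -> S z) -> is_open S.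
Proof.
  intros H.
  set (I := {V : Y -> Prop | is_open V /\ forall z, V z -> S z}).
  assert (E : (fun x => exists i : I, proj1_sig i x) = S).
  { apply functional_extensionality; intro x; apply propositional_extensionality; split.
    - intros [[V [HV HS]] Hx]; simpl in Hx; eauto.
    - intro Hx; destruct (H x Hx) as [V [HV [Vx HS]]].
      exists (exist _ V (conj HV HS)); exact Vx. }
  rewrite <- E. apply open_union. intro i; exact (proj1 (proj2_sig i)).
Qed.

Lemma open_transl (U : Y -> Prop) c : is_open U -> is_open (fun y => U (vadd y c)).
Proof.
  intros HU; apply open_local; intros x Hx.
  destruct (vadd_cont Y U x c HU Hx) as [V [W [HV [HW [Vx [Wc H]]]]]].
  exists V; repeat split; auto.
Qed.

Lemma open_scal (U : Y -> Prop) t : is_open U -> is_open (fun y => U (vscal t y)).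
Proof.
  intros HU; apply open_local; intros x Hx.
  destruct (vscal_cont Y U t x HU Hx) as [d [V [Hd [HV [Vx H]]]]].
  exists V; repeat split; auto. intros z Hz; apply H; auto.
  rewrite Rminus_diag, Rabs_R0; auto.
Qed.

Lemma open_opp (U : Y -> Prop) : is_open U -> is_open (fun y => U (vopp y)).
Proof.
  intros HU.
  replace (fun y => U (vopp y)) with (fun y => U (vscal (-1) y)).
  - apply open_scal; auto.
  - apply functional_extensionality; intro y; rewrite vscal_m1; auto.
Qed.

Lemma int_open (C : Y -> Prop) : is_open (int_set C).
Proof.
  apply open_local; intros x [U [HU [Ux Hs]]].
  exists U; repeat split; auto. intros z Hz; exists U; auto.
Qed.

Section Cone.
Variable C : Y -> Prop.
Hypothesis HC : standing_cone C.

Lemma C_add x y : C x -> C y -> C (vadd x y).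
Proof.
  destruct HC as [Hcone [Hconv _]]. intros Hx Hy.
  assert (H := Hconv x y (/2) ltac:(lra) Hx Hy).
  replace (1 - /2) with (/2) in H by field.
  assert (H2 := Hcone 2 _ ltac:(lra) H).
  rewrite vscal_distr_l, !vscal_assoc in H2.
  replace (2 * /2) with 1 in H2 by field. rewrite !vscal_1 in H2; auto.
Qed.

Lemma C_0 : C vzero.
Proof.
  destruct HC as [Hcone [_ [_ [_ [y [U [_ [Uy Hs]]]]]]]].
  rewrite <- (vscal_0l y). apply Hcone; auto; lra.
Qed.

Lemma int_sub x : int_set C x -> C x.
Proof. intros [U [_ [Ux Hs]]]; auto. Qed.

Lemma C_int_add c k : C c -> int_set C k -> int_set C (vadd c k).
Proof.
  intros Hc [U [HU [Uk Hs]]].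
  exists (fun y => U (vadd y (vopp c))); repeat split.
  - apply open_transl; auto.
  - rewrite (vadd_comm _ c k), <- vadd_assoc, vadd_opp, vadd_0; auto.
  - intros z Hz. replace z with (vadd c (vadd z (vopp c))).
    + apply C_add; auto.
    + rewrite (vadd_comm _ z), vcancel1; auto.
Qed.

Lemma int_scal s k : 0 < s -> int_set C k -> int_set C (vscal s k).
Proof.
  destruct HC as [Hcone _].
  intros Hs [U [HU [Uk Hsub]]].
  exists (fun y => U (vscal (/s) y)); repeat split.
  - apply open_scal; auto.
  - rewrite vscal_assoc. replace (/s * s) with 1 by (field; lra). rewrite vscal_1; auto.
  - intros z Hz. replace z with (vscal s (vscal (/s) z)).
    + apply Hcone; [lra|auto].
    + rewrite vscal_assoc. replace (s * /s) with 1 by (field; lra). apply vscal_1.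
Qed.

Variable e : Y.
Hypothesis He : int_set C (vopp e).

Lemma near k : int_set C k -> exists s, 0 < s /\ int_set C (vadd k (vscal s e)).
Proof.
  intros [U [HU [Uk Hsub]]].
  assert (Hk : U (vadd k (vscal 0 e))) by (rewrite vscal_0l, vadd_0; auto).
  destruct (vadd_cont Y U k (vscal 0 e) HU Hk) as [V [W [HV [HW [Vk [We H]]]]]].
  destruct (vscal_cont Y W 0 e HW We) as [d [V' [Hd [HV' [V'e H']]]]].
  exists (d/2); split; [lra|]. exists U; repeat split; auto.
  apply H; auto. apply H'; auto. rewrite Rminus_0_r, Rabs_right; lra.
Qed.

Lemma L1 A B : Rbar_lt (G_l C e A B) (Finite 0) -> forall b, B b -> set_add A (int_set C) b.
Proof.
  intros HG b Hb. unfold G_l in HG.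
  destruct (Rbar_sup_spec (fun z => exists b, B b /\ z = phi C e A b)) as [Hub _].
  assert (Hpb := Hub _ (ex_intro _ b (conj Hb eq_refl))).
  assert (Hlt : Rbar_lt (phi C e A b) (Finite 0)).
  { destruct (phi C e A b), (Rbar_sup _); simpl in *; auto; try lra; contradiction. }
  unfold phi in Hlt.
  destruct (Rbar_inf_spec (fun z => exists t, z = Finite t /\
              set_add (set_add (sing_set (vscal t e)) A) C b)) as [_ Hglb].
  apply NNPP; intro Hno.
  assert (H0 : Rbar_le (Finite 0) (Rbar_inf (fun z => exists t, z = Finite t /\
              set_add (set_add (sing_set (vscal t e)) A) C b))).
  { apply Hglb. intros y [t [-> Ht]]. simpl.
    destruct (Rle_or_lt 0 t) as [h|h]; auto. exfalso; apply Hno.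
    destruct Ht as [s [c [[s1 [a [Hs1 [Ha Hs]]]] [Hc Hb']]]].
    unfold sing_set in Hs1. subst.
    exists a, (vadd (vscal t e) c). split; [exact Ha|split].
    - rewrite vadd_comm. apply C_int_add; auto.
      rewrite (vscal_neg t e). apply int_scal; auto; lra.
    - rewrite (vadd_comm _ (vscal t e) a), <- vadd_assoc; auto. }
  destruct (Rbar_inf _); simpl in *; auto; lra.
Qed.

Lemma L2 A B : K_compact C B -> (forall b, B b -> set_add A (int_set C) b) ->
  Rbar_lt (G_l C e A B) (Finite 0).
Proof.
  intros HK Hs.
  set (I := {p : Y * R | A (fst p) /\ 0 < snd p}).
  set (U := fun (i : I) y => int_set C (vadd y (vadd (vopp (fst (proj1_sig i)))
                                  (vscal (snd (proj1_sig i)) e)))).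
  destruct (HK I U) as [l Hl].
  { intro i; apply open_transl, int_open. }
  { intros b Hb. destruct (Hs b Hb) as [a [k [Ha [Hk ->]]]].
    destruct (near k Hk) as [s [Hs0 Hks]].
    exists (exist _ (a, s) (conj Ha Hs0)).
    exists (vadd a k), vzero; repeat split.
    - unfold U; simpl. rewrite vswap, <- (vadd_assoc _ a), vcancel2; auto.
    - apply C_0.
    - rewrite vadd_0; auto. }
  destruct (min_pos l (fun i => snd (proj1_sig i))) as [m [Hm Hml]].
  { intro i; exact (proj2 (proj2_sig i)). }
  assert (HG : Rbar_le (G_l C e A B) (Finite (-m))).
  { unfold G_l. destruct (Rbar_sup_spec (fun z => exists b, B b /\ z = phi C e A b))
      as [_ H]. apply H. intros z [y [Hy ->]].
    destruct (Hl y Hy) as [i [Hi [u [c [Hu [Hc ->]]]]]].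
    assert (Hmi := Hml i Hi).
    destruct i as [[a s] [Ha Hs0]]. unfold U in Hu; simpl in Hu, Hmi.
    unfold phi.
    destruct (Rbar_inf_spec (fun z => exists t, z = Finite t /\
       set_add (set_add (sing_set (vscal t e)) A) C (vadd u c))) as [Hlb _].
    assert (Hle : Rbar_le (Rbar_inf (fun z => exists t, z = Finite t /\
       set_add (set_add (sing_set (vscal t e)) A) C (vadd u c))) (Finite (-s))).
    { apply Hlb. exists (-s); split; auto.
      exists (vadd (vscal (-s) e) a), (vadd (vadd u (vadd (vopp a) (vscal s e))) c).
      split; [|split].
      - exists (vscal (-s) e), a; repeat split; auto.
      - apply C_add; auto. apply int_sub; auto.
      - replace (vscal (-s) e) with (vopp (vscal s e)).
        2:{ rewrite <- vscal_m1, vscal_assoc. f_equal; ring. }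
        rewrite <- !vadd_assoc, (vswap a), vcancel1, vswap, vcancel2; auto. }
    destruct (Rbar_inf _); simpl in *; auto; lra. }
  destruct (G_l C e A B); simpl in *; auto; lra.
Qed.

End Cone.
End V.

Theorem theorem4 (Y : TVS) (C : Y -> Prop) (e : Y) (A B : Y -> Prop) :
  standing_cone C ->
  int_set C (vopp e) ->
  in_P0 C A -> in_P0 C B ->
  mpC_compact C A -> mpC_compact C B ->
  (lt_R2plus (Finite 0, Finite 0) (w_e C e A B) <-> set_less_s C A B).
Proof.
  intros HC He _ _ [HA1 HA2] [HB1 HB2].
  unfold lt_R2plus, w_e, G_u, set_less_s; cbn [fst snd].
  rewrite !opp_lt0.
  assert (HKA : K_compact C (set_opp A)).
  { intros I U HU Hcov.
    destruct (HA2 I (fun i y => U i (vopp y))) as [l Hl].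
    { intro i; apply open_opp; auto. }
    { intros a Ha. destruct (Hcov (vopp a)) as [i [u [c [Hu [Hc Heq]]]]].
      { unfold set_opp; rewrite vopp_opp; auto. }
      exists i, (vopp u), (vopp c). unfold set_opp. rewrite !vopp_opp.
      repeat split; auto. rewrite <- vopp_add, <- Heq, vopp_opp; auto. }
    exists l. intros y Hy. destruct (Hl (vopp y) Hy) as [i [Hi [u [c [Hu [Hc Heq]]]]]].
    exists i; split; auto. exists (vopp u), (vopp c). repeat split; auto.
    rewrite <- vopp_add, <- Heq, vopp_opp; auto. }
  split.
  - intros [H1 H2]. split.
    + apply (L1 C HC e He); auto.
    + intros a Ha. destruct (L1 C HC e He _ _ H2 (vopp a)) as [s [k [Hs [Hk Heq]]]].
      { unfold set_opp; rewrite vopp_opp; auto. }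
      exists (vopp s), (vopp k). unfold set_opp in *. rewrite !vopp_opp.
      repeat split; auto. rewrite <- vopp_add, <- Heq, vopp_opp; auto.
  - intros [H1 H2]. split.
    + apply (L2 C HC e); auto.
    + apply (L2 C HC e); auto.
      intros y Hy. destruct (H2 _ Hy) as [s [k [Hs [Hk Heq]]]].
      exists (vopp s), (vopp k). unfold set_opp in *. rewrite vopp_opp.
      repeat split; auto. rewrite <- vopp_add, <- Heq, vopp_opp; auto.
Qed.
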